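(* There is a graded Hermitian norm $N=(N_k)_{k\ge1}$ on $R(\mathbb{P}^1,\mathscr{O}(1))$ such that $FS(N_k)^{1/k}$ converges uniformly as $k\to\infty$ to a fixed smooth positive metric on $\mathscr{O}(1)$, but $N$ is not equivalent to $\mathrm{Hilb}(h)$ for any continuous plurisubharmonic metric $h$ on $\mathscr{O}(1)$.
   Context: $R(\mathbb{P}^1,\mathscr{O}(1))=\bigoplus_{k\ge1}H^0(\mathbb{P}^1,\mathscr{O}(k))$; a graded Hermitian norm is a sequence of Hermitian norms $N_k$ on $H^0(\mathbb{P}^1,\mathscr{O}(k))$. $FS(N_k)$ is the metric on $\mathscr{O}(k)$ with $\sum_i|s_i(x)|^2_{FS(N_k)}=1$ for an $N_k$-orthonormal basis $(s_i)$; uniform convergence of metrics means $\sup|\log(h_k/h)|\to0$. A continuous metric $h$ is psh if its curvature current, locally $\frac{i}{2\pi}\partial\bar\partial(-\log|e|^2_h)$, is positive; $\mathrm{Hilb}_k(h)(s)=(\int|s|^2_hc_1(\mathscr{O}(1),h))^{1/2}$ with the Bedford–Taylor measure. Graded norms $N,N'$ are equivalent if $\frac1k\sup_{v\ne0}|\log N_k(v)-\log N'_k(v)|\to0$. *)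

(* Defs.v *)
From mathcomp Require Import all_boot all_order all_algebra.
From mathcomp Require Import all_classical all_reals all_analysis.
From mathcomp Require Import complex.
Import Order.TTheory GRing.Theory Num.Theory.
Import numFieldNormedType.Exports.

Set Implicit Arguments.
Unset Strict Implicit.
Unset Printing Implicit Defensive.

Local Open Scope classical_set_scope.
Local Open Scope ring_scope.

(* Conventions:
   - P^1 = C ∪ {∞} with affine chart z = X1/X0 on U0 and w = X0/X1 = 1/z on U1;
     the complex plane C is modelled as R*R, the point (x,y) being x + i y.
   - H^0(P^1,O(k)) = polynomials p in C[z] of degree <= k (P = X0^k p(X1/X0)).
   - A metric h on O(1) is described by its weight phi on U0 :
       |X0|_h^2 = exp(- phi(z)),  so  |P|^2_{h^k}(z) = |p(z)|^2 exp(-k phi(z)),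
     and on U1 by  psi1(w) = phi(1/w) + log |w|^2  (weight of the frame X1). *)

Section Defs.
Variable R : realType.

Notation C := R[i].

Definition cplx (z : R * R) : C := (z.1 +i* z.2)%C.

Definition abs2 (z : C) : R := (complex.Re z) ^+ 2 + (complex.Im z) ^+ 2.

Definition nsq (z : R * R) : R := z.1 ^+ 2 + z.2 ^+ 2.

Definition cinv (w : R * R) : R * R := (w.1 / nsq w, - w.2 / nsq w).

Fixpoint Ck (n : nat) (f : R * R -> R) : Prop :=
  match n with
  | 0 => continuous f
  | n'.+1 => [/\ continuous f, (forall v x, derivable f x v)
                & forall v : R * R, Ck n' ('D_v f)]
  end.

Definition smooth (f : R * R -> R) : Prop := forall n, Ck n f.

Definition Lap (f : R * R -> R) (z : R * R) : R :=
  'D_((1, 0) : R * R) ('D_((1, 0) : R * R) f) z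
  + 'D_((0, 1) : R * R) ('D_((0, 1) : R * R) f) z.

Definition test_fun (chi : R * R -> R) : Prop :=
  smooth chi /\ exists r : R, forall z, r < `|z| -> chi z = 0.

Definition leb2 := (@lebesgue_measure R \x @lebesgue_measure R)%E.

(* the current (i/2pi) ddbar u, locally Delta u/(4 pi) dx dy, is positive:
   its action on every nonnegative test function is nonnegative *)
Definition pos_curvature_current (u : R * R -> R) : Prop :=
  forall chi, test_fun chi -> (forall z, 0 <= chi z) ->
    (0 <= \int[leb2]_(z in setT) (u z * Lap chi z)%:E)%E.

Definition cont_metric_weight (phi : R * R -> R) (psi1 : R * R -> R) : Prop :=
  [/\ continuous phi, continuous psi1 &
      forall w, w != 0 -> psi1 w = phi (cinv w) + ln (nsq w)].

Definition cont_metric (phi : R * R -> R) : Prop :=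
  exists psi1, cont_metric_weight phi psi1.

Definition cont_psh_metric (phi : R * R -> R) : Prop :=
  exists psi1, [/\ cont_metric_weight phi psi1,
                   pos_curvature_current phi & pos_curvature_current psi1].

Definition smooth_pos_metric (phi : R * R -> R) : Prop :=
  exists psi1, [/\ cont_metric_weight phi psi1, smooth phi, smooth psi1,
                   (forall z, 0 < Lap phi z) & (forall w, 0 < Lap psi1 w)].

(* Bedford--Taylor measure c_1(O(1),h) = (i/2pi) ddbar phi, as a measure on the
   chart C (it charges no point, in particular not infinity) *)
Definition is_MA_measure (phi : R * R -> R) (mu : {measure set (R * R) -> \bar R}) :=
  forall chi, test_fun chi -> (forall z, 0 <= chi z) ->
    (\int[mu]_(z in setT) (chi z)%:E
     = ((4 * pi)^-1)%:E * \int[leb2]_(z in setT) (phi z * Lap chi z)%:E)%E.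

Definition H0 (k : nat) : pred {poly C} := fun p => (size p <= k.+1)%N.

Definition herm_norm (k : nat) (N : {poly C} -> R) : Prop :=
  exists B : {poly C} -> {poly C} -> C,
  [/\ (forall a p q r, p \in H0 k -> q \in H0 k -> r \in H0 k ->
          B (a *: p + q) r = a * B p r + B q r),
      (forall p q, p \in H0 k -> q \in H0 k -> B q p = (B p q)^*%C),
      (forall p, p \in H0 k -> p != 0 -> 0 < B p p) &
      (forall p, p \in H0 k -> N p = Num.sqrt (complex.Re (B p p)))].

(* graded Hermitian norm on R(P^1,O(1)) (index 0 is irrelevant) *)
Definition graded_herm_norm (N : nat -> {poly C} -> R) : Prop :=
  forall k, (0 < k)%N -> herm_norm k (N k).

Definition orthonormal_basis (k : nat) (N : {poly C} -> R)
  (s : 'I_k.+1 -> {poly C}) : Prop :=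
  (forall i, s i \in H0 k) /\
  forall a : 'I_k.+1 -> C,
    N (\sum_i a i *: s i) ^+ 2 = \sum_i abs2 (a i).

(* weight of FS(N_k) on the chart U0 computed from an orthonormal basis s:
   sum_i |s_i|^2_{FS} = 1 means exp(-psi) * sum_i |s_i(z)|^2 = 1 *)
Definition FS_weight (k : nat) (s : 'I_k.+1 -> {poly C}) (z : R * R) : R :=
  ln (\sum_i abs2 (s i).[cplx z]).

(* FS(N_k)^{1/k} -> h uniformly: sup |log (FS(N_k)^{1/k} / h)| -> 0 *)
Definition FS_unif_cvg (N : nat -> {poly C} -> R) (phi : R * R -> R) : Prop :=
  forall eps : R, 0 < eps -> exists K : nat, forall k, (K <= k)%N -> (0 < k)%N ->
    forall s : 'I_k.+1 -> {poly C}, orthonormal_basis (N k) s ->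
      forall z, `| FS_weight s z / k%:R - phi z | <= eps.

Definition Hilb (phi : R * R -> R) (mu : {measure set (R * R) -> \bar R})
  (k : nat) (p : {poly C}) : R :=
  Num.sqrt (fine (\int[mu]_(z in setT)
                   (abs2 p.[cplx z] * expR (- (k%:R * phi z)))%:E)%E).

Definition equiv_graded_norms (N N' : nat -> {poly C} -> R) : Prop :=
  forall eps : R, 0 < eps -> exists K : nat, forall k, (K <= k)%N -> (0 < k)%N ->
    forall v, v \in H0 k -> v != 0 ->
      `| ln (N k v) - ln (N' k v) | <= eps * k%:R.

End Defs.

(* Main.v *)
Require Import Defs.
From mathcomp Require Import all_boot all_order all_algebra.
From mathcomp Require Import all_classical all_reals all_analysis.
From mathcomp Require Import complex.
Import Order.TTheory GRing.Theory Num.Theory.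
Import numFieldNormedType.Exports.
Local Open Scope classical_set_scope.
Local Open Scope ring_scope.
From mathcomp Require Import measurable_realfun.
From mathcomp Require Import ring lra.
From mathcomp Require Import zify.
Section S.
Variable R : realType.
Notation C := R[i].

Lemma abs2M (a b : C) : abs2 (a * b) = abs2 a * abs2 b.
Proof. by case: a => a1 a2; case: b => b1 b2; rewrite /abs2 /=; ring. Qed.

Lemma abs2_ge0 (a : C) : 0 <= abs2 a.
Proof. by rewrite /abs2 addr_ge0 // sqr_ge0. Qed.

Lemma abs2X (a : C) n : abs2 (a ^+ n) = abs2 a ^+ n.
Proof. elim: n => [|n IH]; first by rewrite !expr0 /abs2 /=; ring.
by rewrite !exprS abs2M IH. Qed.

Lemma abs2_cplx (z : R * R) : abs2 (cplx z) = nsq z.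
Proof. by []. Qed.

Lemma low {N H kk : R} : 0 <= H -> ln N <= - kk -> 0 < kk ->
  `|ln N - ln H| <= 1 / 4 * kk -> 0 < H < 1.
Proof.
move=> H0 lN k0 hd.
have [H00|Hp] := eqVneq H 0.
  move: hd; rewrite H00 (ln0 (lexx 0)) subr0 ler_norml => /andP[a _]; lra.
have Hpos : 0 < H by rewrite lt_def Hp H0.
rewrite Hpos /=; rewrite ltNge; apply/negP => H1.
have := ln_ge0 H1; move: hd; rewrite ler_norml => /andP[a b]; lra.
Qed.

Lemma high {N H kk : R} : 0 <= H -> kk <= ln N -> 0 < kk ->
  `|ln N - ln H| <= 1 / 4 * kk -> 1 < H.
Proof.
move=> H0 lN k0 hd.
rewrite ltNge; apply/negP => H1.
have := ln_le0 H1; move: hd; rewrite ler_norml => /andP[a b]; lra.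
Qed.

Lemma fine_sqrt (x : \bar R) : 0 < Num.sqrt (fine x) ->
  x = ((Num.sqrt (fine x)) ^+ 2)%:E.
Proof.
case: x => [r| |] /=; rewrite ?sqrtr0 ?ltxx //.
move=> h; rewrite sqr_sqrtr //; apply: ltW.
by move: h; rewrite sqrtr_gt0.
Qed.

Lemma open_measurable2 (A : set (R * R)) : open A -> measurable A.
Proof.
move=> oA.
pose B := fun q : (rat * rat) * rat => `](ratr q.1.1 : R) - ratr q.2, ratr q.1.1 + ratr q.2[%classic `*` `](ratr q.1.2 : R) - ratr q.2, ratr q.1.2 + ratr q.2[%classic.
have -> : A = \bigcup_q (if pselect (B q `<=` A) then B q else set0).
  apply/seteqP; split; last first.
    by move=> z [q _]; case: pselect => // BA /BA.
  move=> z Az.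
  have : nbhs z A by apply: oA.
  rewrite -nbhs_ballE => -[r r0 zrA].
  have /rat_in_itvoo[q3] : (0 : R) < r / 2 by rewrite divr_gt0.
  rewrite in_itv /= => /andP[q30 q3r].
  have /rat_in_itvoo[q1] : z.1 - ratr q3 < z.1 + ratr q3 by lra.
  rewrite in_itv /= => /andP[q1a q1b].
  have /rat_in_itvoo[q2] : z.2 - ratr q3 < z.2 + ratr q3 by lra.
  rewrite in_itv /= => /andP[q2a q2b].
  have zB : B ((q1, q2), q3) z.
    by split => /=; rewrite in_itv /=; apply/andP; split; lra.
  exists ((q1, q2), q3) => //; case: pselect => // nB; exfalso; apply: nB.
  move=> [w1 w2] [] /=.
  rewrite !in_itv /= => /andP[h1 h2] /andP[h3 h4].
  apply: zrA; split => /=; rewrite /ball /=; rewrite ltr_norml; apply/andP; split; lra.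
apply: countable_bigcupT_measurable => // q; case: pselect => // ?.
by apply: measurableX; exact: measurable_itv.
exact: measurable0.
Qed.

Lemma continuous_measurable2 (f : R * R -> R) : continuous f -> measurable_fun setT f.
Proof.
move=> /continuousP cf; apply: (measurability _ (RGenOpens.measurableE R)).
move=> _ [_ [a [b ->] <-]]; rewrite setTI; apply: open_measurable2.
by apply: cf; exact: interval_open.
Qed.

Definition wt (k j : nat) : R :=
  if j == 1%N then expR (2 * k%:R) else expR (- (2 * k%:R)) / ('C(k, j))%:R.

Definition NN (k : nat) (p : {poly C}) : R :=
  Num.sqrt (\sum_(j < k.+1) wt k j * abs2 p`_j).

Lemma wt_gt0 k j : (j <= k)%N -> 0 < wt k j.
Proof.
move=> jk; rewrite /wt; case: eqP => _; first exact: expR_gt0.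
by rewrite divr_gt0 ?expR_gt0 // ltr0n bin_gt0.
Qed.

Lemma abs2_0 : abs2 (0 : C) = 0. Proof. by rewrite /abs2 /=; ring. Qed.
Lemma abs2_1 : abs2 (1 : C) = 1. Proof. by rewrite /abs2 /=; ring. Qed.

Lemma NN_Xn k m : (m <= k)%N -> NN k 'X^m = Num.sqrt (wt k m).
Proof.
move=> mk; rewrite /NN (bigD1 (Ordinal (mk : (m < k.+1)%N))) //= coefXn eqxx abs2_1 mulr1.
rewrite big1 ?addr0 // => j /negPf hj; rewrite coefXn.
suff -> : (nat_of_ord j == m) = false by rewrite abs2_0 mulr0.
by apply/negP => /eqP jm; move: hj; rewrite -val_eqE /= jm eqxx.
Qed.

Lemma sqrt_expR (x : R) : Num.sqrt (expR (2 * x)) = expR x.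
Proof.
by rewrite -[2]/(2%:R) expRM_natl sqrtr_sqr gtr0_norm ?expR_gt0.
Qed.

Lemma not_equiv (phi : R * R -> R) (mu : {measure set (R * R) -> \bar R}) :
  continuous phi -> ~ equiv_graded_norms NN (Hilb phi mu).
Proof.
have e : (0:R) < 1/4 by lra.
move=> cphi /(_ _ e) [K HK].
pose k := maxn K 2.
have Kk : (K <= k)%N by rewrite leq_maxl.
have k2 : (2 <= k)%N by rewrite leq_maxr.
have k0 : (0 < k)%N by apply: leq_trans k2.
have kR : (0:R) < k%:R by rewrite ltr0n.
have inH m : (m <= k)%N -> 'X^m \in H0 (R:=R) k.
  by move=> mk; rewrite unfold_in /H0 size_polyXn.
have nz m : 'X^m != 0 :> {poly C} by rewrite monic_neq0 ?monicXn.
have d m (hm : (m <= k)%N) := HK k Kk k0 _ (inH m hm) (nz m).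
pose mm i := (\int[mu]_(z in setT) ((nsq z ^+ i) * expR (- (k%:R * phi z)))%:E)%E.
have HE i : Hilb phi mu k 'X^i = Num.sqrt (fine (mm i)).
  rewrite /Hilb; congr (Num.sqrt (fine _)); apply: eq_integral => z _.
  by rewrite hornerXn abs2X abs2_cplx.
have Hge0 i : 0 <= Num.sqrt (fine (mm i)) := sqrtr_ge0 _.
have lnN0 : ln (NN k 'X^0) <= - k%:R.
  rewrite NN_Xn // /wt /= bin0 divr1 -mulrN sqrt_expR expRK //.
have lnN2 : ln (NN k 'X^2) <= - k%:R.
  rewrite NN_Xn // /wt /=.
  have -> : (- k%:R : R) = ln (expR (- k%:R)) by rewrite expRK.
  rewrite ler_ln ?posrE ?sqrtr_gt0 ?expR_gt0 //; last first.
    by rewrite divr_gt0 ?expR_gt0 // ltr0n bin_gt0.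
  rewrite -(sqrt_expR (- k%:R)) ler_sqrt ?expR_gt0 // mulrN.
  rewrite ler_pdivrMr ?ltr0n ?bin_gt0 // ler_peMr ?expR_ge0 //.
  by rewrite ler1n bin_gt0.
have lnN1 : k%:R <= ln (NN k 'X^1).
  rewrite NN_Xn // /wt /= sqrt_expR expRK //.
have /andP[h00 h01] : 0 < Num.sqrt (fine (mm 0%N)) < 1.
  apply: (low (Hge0 0%N) lnN0 kR).
  by rewrite -HE; exact: d.
have /andP[h20 h21] : 0 < Num.sqrt (fine (mm 2%N)) < 1.
  apply: (low (Hge0 2%N) lnN2 kR).
  by rewrite -HE; exact: d.
have h1 : 1 < Num.sqrt (fine (mm 1%N)).
  apply: (high (Hge0 1%N) lnN1 kR).
  by rewrite -HE; exact: d.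
have E0 := @fine_sqrt _ h00.
have E2 := @fine_sqrt _ h20.
have E1 := @fine_sqrt _ (lt_trans ltr01 h1).
have meas i : measurable_fun setT (fun z : R * R => nsq z ^+ i * expR (- (k%:R * phi z))).
  apply: measurable_funM.
    apply: measurable_funX; apply: measurable_funD; apply: measurable_funX.
      exact: measurable_fst.
    exact: measurable_snd.
  have mg : measurable_fun setT (fun z : R * R => - (k%:R * phi z)).
    apply: measurable_funN.
    apply: measurable_funM; first exact: measurable_cst.
    exact: continuous_measurable2.

  by apply: measurableT_comp; [exact: measurable_expR | exact: mg].
have pos i (z : R * R) : 0 <= nsq z ^+ i * expR (- (k%:R * phi z)).
  by rewrite mulr_ge0 ?expR_ge0 // exprn_ge0 // /nsq addr_ge0 // sqr_ge0.
have le : (mm 1%N + mm 1%N <= mm 0%N + mm 2%N)%E.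
  rewrite /mm -!ge0_integralD //; first last.
  - by apply/measurable_EFinP; exact: meas.
  - by move=> z _; rewrite lee_fin.
  - by apply/measurable_EFinP; exact: meas.
  - by move=> z _; rewrite lee_fin.
  - by apply/measurable_EFinP; exact: meas.
  - by move=> z _; rewrite lee_fin.
  - by apply/measurable_EFinP; exact: meas.
  - by move=> z _; rewrite lee_fin.
  apply: ge0_le_integral => //.
  - by move=> z _; rewrite -EFinD lee_fin addr_ge0.
  - by apply: emeasurable_funD; apply/measurable_EFinP; exact: meas.
  - by apply: emeasurable_funD; apply/measurable_EFinP; exact: meas.
  move=> z _; rewrite -!EFinD lee_fin expr0 expr1 mul1r.
  have := expR_ge0 (- (k%:R * phi z)); set E := expR _; set x := nsq z.
  move=> E0'; have := mulr_ge0 E0' (sqr_ge0 (1 - x)).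
  nra.
move: le; rewrite E0 E1 E2 -!EFinD lee_fin.
nra.
Qed.

Definition BB (k : nat) (p q : {poly C}) : C :=
  \sum_(j < k.+1) real_complex R (wt k j) * p`_j * (q`_j)^*%C.

Lemma abs2_gt0 (c : C) : c != 0 -> 0 < abs2 c.
Proof.
case: c => a b h; rewrite lt_def abs2_ge0 andbT; apply: contra h.
rewrite /abs2 /= paddr_eq0 ?sqr_ge0 // !sqrf_eq0 => /andP[/eqP -> /eqP ->].
by [].
Qed.

Lemma BBpp k p : BB k p p = real_complex R (\sum_(j < k.+1) wt k j * abs2 p`_j).
Proof.
rewrite rmorph_sum; apply: eq_bigr => j _.
case: (p`_j) => a b; apply/eqP; rewrite eq_complex /= /abs2 /=.
by apply/andP; split; apply/eqP; ring.
Qed.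

Lemma herm_NN k : herm_norm k (NN k).
Proof.
exists (BB k); split.
- move=> a p q r _ _ _; rewrite /BB mulr_sumr -big_split /=.
  by apply: eq_bigr => j _; rewrite coefD coefZ; ring.
- move=> p q _ _; rewrite /BB rmorph_sum; apply: eq_bigr => j _.
  by rewrite !rmorphM /= conjcK oppr0 complexr0; ring.
- move=> p pk p0; rewrite BBpp -[0]/(real_complex R 0) ltcR.
  have sk : ((size p).-1 < k.+1)%N.
    move: pk; rewrite unfold_in /H0 => pk.
    lia.
  rewrite (bigD1 (Ordinal sk)) //=.
  have t : 0 < wt k (size p).-1 * abs2 p`_((size p).-1).
    rewrite mulr_gt0 //; last first.
      by rewrite abs2_gt0 // -lead_coefE lead_coef_eq0.
    by apply: wt_gt0; exact: sk.
  have r : 0 <= \sum_(i < k.+1 | i != Ordinal sk) wt k i * abs2 p`_i.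
    by apply: sumr_ge0 => i _; rewrite mulr_ge0 ?abs2_ge0 // ltW // wt_gt0 //; exact: ltn_ord i.
  lra.
- by move=> p _; rewrite /NN BBpp.
Qed.



Lemma abs2_eq0 (c : C) : abs2 c = 0 -> c = 0.
Proof.
move=> h; have [//|/abs2_gt0] := eqVneq c 0; by rewrite h ltxx.
Qed.

Lemma NN0 k : NN k 0 = 0.
Proof.
rewrite /NN big1 ?sqrtr0 // => j _; by rewrite coef0 abs2_0 mulr0.
Qed.

Lemma coef_H0 {k} {p : {poly C}} {j} : p \in H0 k -> (k < j)%N -> p`_j = 0.
Proof.
rewrite unfold_in /H0 => pk kj; apply: nth_default; exact: leq_trans pk kj.
Qed.

Lemma span {k} {s : 'I_k.+1 -> {poly C}} : orthonormal_basis (NN k) s ->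
  forall q, q \in H0 k -> exists a : 'I_k.+1 -> C, q = \sum_i a i *: s i.
Proof.
case=> sH sN q qH.
pose M : 'M[C]_(k.+1) := \matrix_(i, j) (s i)`_j.
have coefS (a : 'I_k.+1 -> C) (j : 'I_k.+1) :
    (\sum_i a i *: s i)`_j = ((\row_i a i) *m M) 0 j.
  by rewrite coef_sum !mxE; apply: eq_bigr => i _; rewrite coefZ !mxE.
have Mfree : row_free M.
  apply: inj_row_free => v vM.
  pose a i := v 0 i.
  have ra : \row_i a i = v by apply/rowP => i; rewrite mxE.
  have p0 : \sum_i a i *: s i = 0.
    apply/polyP => j; rewrite coef0.
    case: (ltnP j k.+1) => jk.
      by have := coefS a (Ordinal jk); rewrite /= ra vM mxE.
    rewrite coef_sum big1 // => i _; rewrite coefZ (coef_H0 (sH i)) ?mulr0 //.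
  have := sN a; rewrite p0 NN0 expr0n /= => /esym /eqP.
  rewrite psumr_eq0; last by move=> i _; exact: abs2_ge0.
  move=> /allP h; apply/rowP => i; rewrite mxE.
  by apply: abs2_eq0; apply/eqP; exact: h (mem_index_enum i).
have Mu : M \in unitmx by rewrite -row_free_unit.
pose v := \row_(j < k.+1) q`_j.
pose a i := (v *m invmx M) 0 i.
exists a; apply/polyP => j.
case: (ltnP j k.+1) => jk.
  have := coefS a (Ordinal jk); rewrite /= => ->.
  rewrite (_ : \row_i a i = v *m invmx M); last by apply/rowP => i; rewrite mxE.
  by rewrite mulmxKV // mxE.
rewrite (coef_H0 qH) // coef_sum big1 // => i _; rewrite coefZ (coef_H0 (sH i)) ?mulr0 //.
Qed.


Lemma ReM_le (a b : C) (l : R) : 0 < l ->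
  complex.Re (a * b) <= (l * abs2 a + abs2 b / l) / 2.
Proof.
case: a => a1 a2; case: b => b1 b2 l0; rewrite /abs2 /=.
have m0 : 0 < l^-1 by rewrite invr_gt0.
have lm : l * l^-1 = 1 by rewrite mulfV // gt_eqF.
set m := l^-1 in m0 lm *.
have h1 := mulr_ge0 (ltW m0) (sqr_ge0 (l * a1 - b1)).
have h2 := mulr_ge0 (ltW m0) (sqr_ge0 (l * a2 + b2)).
have e1 : m * (l * a1 - b1) ^+ 2 = l * a1 ^+ 2 - 2 * a1 * b1 + m * b1 ^+ 2.
  rewrite !expr2; have -> : m * ((l * a1 - b1) * (l * a1 - b1)) =
    (l * m) * (l * a1 * a1) - 2 * (l * m) * a1 * b1 + m * (b1 * b1) by ring.
  by rewrite mulrC lm; ring.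
have e2 : m * (l * a2 + b2) ^+ 2 = l * a2 ^+ 2 + 2 * a2 * b2 + m * b2 ^+ 2.
  rewrite !expr2; have -> : m * ((l * a2 + b2) * (l * a2 + b2)) =
    (l * m) * (l * a2 * a2) + 2 * (l * m) * a2 * b2 + m * (b2 * b2) by ring.
  by rewrite mulrC lm; ring.
rewrite e1 in h1; rewrite e2 in h2.
have -> : (b1 ^+ 2 + b2 ^+ 2) / l = m * b1 ^+ 2 + m * b2 ^+ 2 by rewrite /m; ring.
lra.
Qed.

Lemma ReD (x y : C) : complex.Re (x + y) = complex.Re x + complex.Re y.
Proof. by case: x; case: y. Qed.

Lemma Re_sum I (r : seq I) (P : pred I) (F : I -> C) :
  complex.Re (\sum_(i <- r | P i) F i) = \sum_(i <- r | P i) complex.Re (F i).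
Proof. exact: (big_morph _ ReD). Qed.

Lemma abs2J (x : C) : abs2 (x^*%C) = abs2 x.
Proof. by case: x => a b; rewrite /abs2 /=; ring. Qed.

Lemma ReJM (x : C) : complex.Re (x^*%C * x) = abs2 x.
Proof. by case: x => a b; rewrite /abs2 /=; ring. Qed.

Lemma abs2_real (r : R) : abs2 (real_complex R r) = r ^+ 2.
Proof. by rewrite /abs2 /=; ring. Qed.

Lemma NNsq k p : NN k p ^+ 2 = \sum_(j < k.+1) wt k j * abs2 p`_j.
Proof.
rewrite sqr_sqrtr // sumr_ge0 // => j _; rewrite mulr_ge0 ?abs2_ge0 // ltW //.
apply: wt_gt0; exact: ltn_ord j.
Qed.

Lemma FS_eq k (s : 'I_k.+1 -> {poly C}) (c : C) :
  orthonormal_basis (NN k) s ->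
  \sum_i abs2 (s i).[c] = \sum_(j < k.+1) abs2 (c ^+ j) / wt k j.
Proof.
move=> ob; have [sH sN] := ob.
set S := \sum_i _; set U := \sum_(j < k.+1) _.
have wpos (j : 'I_k.+1) : 0 < wt k j by apply: wt_gt0; exact: ltn_ord j.
apply/eqP; rewrite eq_le; apply/andP; split.
- pose p := \sum_i (s i).[c]^*%C *: s i.
  have hN : NN k p ^+ 2 = S.
    by rewrite /p sN; apply: eq_bigr => i _; rewrite abs2J.
  have hR : complex.Re p.[c] = S.
    rewrite /p horner_sum Re_sum; apply: eq_bigr => i _.
    by rewrite hornerZ ReJM.
  have pk : (size p <= k.+1)%N.
    apply/leq_sizeP => j kj; rewrite coef_sum big1 // => i _.
    by rewrite coefZ (coef_H0 (sH i)) ?mulr0.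
  have : complex.Re p.[c] <= (NN k p ^+ 2 + U) / 2.
    rewrite (horner_coef_wide _ pk) Re_sum NNsq /U -big_split /= mulr_suml.
    apply: ler_sum => j _; rewrite mulrDl.
    have := @ReM_le p`_j (c ^+ j) _ (wpos j); rewrite mulrDl; by [].
  rewrite hR hN; lra.
- pose q := \poly_(j < k.+1) ((c ^+ j)^*%C * real_complex R (wt k j)^-1).
  have qk : (size q <= k.+1)%N by exact: size_poly.
  have qH : q \in H0 k by rewrite unfold_in /H0.
  have hN : NN k q ^+ 2 = U.
    rewrite NNsq /U; apply: eq_bigr => j _.
    rewrite coef_poly ltn_ord abs2M abs2J abs2_real.
    have := wpos j; move: (wt k j) => w w0; field; by rewrite gt_eqF.
  have hR : complex.Re q.[c] = U.
    rewrite (horner_coef_wide _ qk) Re_sum /U; apply: eq_bigr => j _.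
    rewrite coef_poly ltn_ord.
    case: (c ^+ j) => a b; rewrite /abs2 /=; field.
    by rewrite gt_eqF.
  have [a qa] := span ob q qH.
  have hA : \sum_i abs2 (a i) = U by rewrite -(sN a) -qa.
  have : complex.Re q.[c] <= (U + S) / 2.
    rewrite {1}qa horner_sum Re_sum -hA /S -big_split /= mulr_suml.
    apply: ler_sum => i _; rewrite hornerZ.
    have := @ReM_le (a i) (s i).[c] 1 ltr01; rewrite mul1r divr1; by [].
  rewrite hR; lra.
Qed.


Lemma bin2_2 k : (2 * 'C(k, 2) = k * k.-1)%N.
Proof. elim: k => [//|k IH]; rewrite binS bin1 mulnDr IH /=; case: k {IH} => //= k; lia. Qed.

Lemma U_bounds {k} {x : R} : (2 <= k)%N -> 0 <= x ->
  expR (2 * k%:R) * (1 + x) ^+ k / 2 <= \sum_(j < k.+1) x ^+ j / wt k j /\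
  \sum_(j < k.+1) x ^+ j / wt k j <= expR (2 * k%:R) * (1 + x) ^+ k.
Proof.
move=> k2 x0.
have k1' : (1 < k.+1)%N by lia.
have k2' : (2 < k.+1)%N by lia.
set E := expR (2 * k%:R).
have E1 : 1 <= E by rewrite /E -expR0 ler_expR mulr_ge0 // ler0n.
pose R2 := \sum_(2 <= j < k.+1) ('C(k, j))%:R * x ^+ j.
have hU : \sum_(j < k.+1) x ^+ j / wt k j = E + x / E + E * R2.
  rewrite -(big_mkord xpredT (fun j => x ^+ j / wt k j)) big_ltn // big_ltn //.
  rewrite /wt /= bin0 divr1 expRN invrK expr0 mul1r expr1 -/E.
  rewrite /R2 mulr_sumr addrA; congr (_ + _).
  apply: eq_big_nat => j /andP[j2 _].
  have -> : (j == 1%N) = false by apply/negbTE; case: j j2 => [|[|]].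
  by rewrite invf_div invrK; ring.
have hP : (1 + x) ^+ k = 1 + k%:R * x + R2.
  rewrite exprDn -(big_mkord xpredT (fun i => 1 ^+ (k - i) * x ^+ i *+ 'C(k, i))).
  rewrite big_ltn // big_ltn //=.
  rewrite (bin0 k) (bin1 k) !expr1n !mul1r expr0 expr1 addrA.
  rewrite /R2 mulr_natl; congr (_ + _).
  by apply: eq_big_nat => j _; rewrite expr1n mul1r mulr_natl.
have R2ge : ('C(k, 2))%:R * x ^+ 2 <= R2.
  rewrite /R2 big_ltn // lerDl sumr_ge0 // => j _.
  by rewrite mulr_ge0 ?ler0n ?exprn_ge0.
have cb : (k%:R : R) ^+ 2 <= 4 * ('C(k, 2))%:R.
  have := bin2_2 k; have h : (k * k <= 4 * 'C(k, 2))%N.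
    by have := bin2_2 k; lia.
  move=> _; rewrite expr2 -natrM -[4]/(4%:R) -natrM ler_nat; exact: h.
have kx : k%:R * x <= 1 + R2.
  have := sqr_ge0 (k%:R * x / 2 - 1).
  have c0 : (0 : R) <= ('C(k, 2))%:R by rewrite ler0n.
  have x2 : 0 <= x ^+ 2 by rewrite exprn_ge0.
  have := ler_wpM2r x2 cb. nra.
have R20 : 0 <= R2 by apply: le_trans R2ge; rewrite mulr_ge0 ?ler0n ?exprn_ge0.
have E0 : 0 < E by rewrite /E expR_gt0.
rewrite hU hP; split.
- have : x / E >= 0 by rewrite divr_ge0 // ltW.
  have : E * (k%:R * x) <= E * (1 + R2) by rewrite ler_wpM2l // ltW.
  rewrite !mulrDr mulr1; lra.
- have xE : x / E <= x by rewrite ler_pdivrMr // ler_peMr.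
  have k1 : (1 : R) <= k%:R by rewrite ler1n; apply: leq_trans k2.
  have : x <= E * (k%:R * x).
    have Ek : 1 <= E * k%:R by nra.
    have := mulr_ge0 (ltac:(by rewrite subr_ge0) : 0 <= E * k%:R - 1) x0; nra.
  rewrite !mulrDr mulr1; lra.
Qed.


Definition phi0 (z : R * R) : R := 2 + ln (1 + nsq z).

Lemma FS_cvg : FS_unif_cvg NN phi0.
Proof.
move=> eps e0.
have [n hn] : exists n : nat, eps^-1 < n%:R.
  by exists (Num.Def.archi_bound eps^-1); apply: archi_boundP; rewrite invr_ge0 ltW.
exists (maxn n 2) => k Kk k0 s ob z.
have k2 : (2 <= k)%N by apply: leq_trans Kk; rewrite leq_maxr.
have nk : (n <= k)%N by apply: leq_trans Kk; rewrite leq_maxl.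
rewrite /FS_weight (@FS_eq k s (cplx z) ob).
have -> : \sum_(j < k.+1) abs2 (cplx z ^+ j) / wt k j =
          \sum_(j < k.+1) (nsq z) ^+ j / wt k j.
  by apply: eq_bigr => j _; rewrite abs2X abs2_cplx.
have x0 : 0 <= nsq z by rewrite /nsq addr_ge0 // sqr_ge0.
rewrite /phi0; move: x0; set x := nsq z => x0.
have [lo hi] := U_bounds k2 x0.
set U := \sum_(j < k.+1) _ in lo hi *.
set E := expR (2 * k%:R) in lo hi *.
set P := (1 + x) ^+ k in lo hi *.
have P0 : 0 < P by rewrite exprn_gt0 // ltr_pwDl.
have E0 : 0 < E by rewrite expR_gt0.
have EP0 : 0 < E * P by rewrite mulr_gt0.
have U0 : 0 < U by apply: lt_le_trans lo; rewrite divr_gt0.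
have hEP : ln (E * P) = k%:R * (2 + ln (1 + x)).
  rewrite lnM ?posrE // expRK lnXn ?ltr_pwDl // -mulr_natl; ring.
have up : ln U <= ln (E * P) by rewrite ler_ln ?posrE.
have lw : ln (E * P) - 1 <= ln U.
  have : ln (E * P / 2) <= ln U by rewrite ler_ln ?posrE // divr_gt0.
  rewrite ln_div ?posrE //.
  have l2 : ln (2 : R) <= 1.
    have -> : (2 : R) = 1 + 1 by lra.
    apply: le_ln1Dx; lra.
  lra.
have kp : (0 : R) < k%:R by rewrite ltr0n.
have -> : ln U / k%:R - (2 + ln (1 + x)) = (ln U - k%:R * (2 + ln (1 + x))) / k%:R.
  by field; rewrite gt_eqF.
have ki : (0 : R) <= k%:R^-1 by rewrite invr_ge0 ltW.
rewrite normrM (ger0_norm ki) ler_pdivrMr //.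
have h1 : `|ln U - k%:R * (2 + ln (1 + x))| <= 1.
  rewrite ler_norml; apply/andP; split; lra.
have h2 : 1 <= eps * k%:R.
  have nk' : (n%:R : R) <= k%:R by rewrite ler_nat.
  have h : eps * eps^-1 < eps * n%:R by rewrite ltr_pM2l.
  rewrite mulfV ?gt_eqF // in h.
  have : eps * n%:R <= eps * k%:R by rewrite ler_pM2l.
  lra.
lra.
Qed.

End S.

Section S2.
Variable R : realType.

Lemma cont_fst : continuous (fun z : R * R => z.1).
Proof. move=> z; exact: cvg_fst. Qed.
Lemma cont_snd : continuous (fun z : R * R => z.2).
Proof. move=> z; exact: cvg_snd. Qed.

Lemma is_derive_line (f : R * R -> R) (x v : R * R) (df : R) :
  is_derive (0 : R) 1 (fun h : R => f (h *: v + x)) df -> is_derive x v f df.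
Proof.
move=> [d1 e1]; split; first exact: (derivable1P f x v).2 d1.
rewrite -e1 /derive; f_equal; f_equal; apply: funext => h /=.
by rewrite addr0 scale0r add0r [_%:A]mulr1.
Qed.

Lemma line_is_derive {f : R * R -> R} {x v : R * R} {df : R} :
  is_derive x v f df -> is_derive (0 : R) 1 (fun h : R => f (h *: v + x)) df.
Proof.
move=> [d1 e1]; split; first exact: (derivable1P f x v).1 d1.
rewrite -e1 /derive; f_equal; f_equal; apply: funext => h /=.
by rewrite addr0 scale0r add0r [_%:A]mulr1.
Qed.

Lemma scR (a b : R) : a *: b = a * b. Proof. by []. Qed.

Lemma der_fst (x v : R * R) : is_derive x v (fun z : R * R => z.1) v.1.
Proof.
apply: is_derive_line => /=.
have -> : (fun h : R => (h *: v + x).1) = (fun h => h * v.1 + x.1) by [].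
by apply: is_derive_eq; rewrite !scR; ring.
Qed.

Lemma der_snd (x v : R * R) : is_derive x v (fun z : R * R => z.2) v.2.
Proof.
apply: is_derive_line => /=.
have -> : (fun h : R => (h *: v + x).2) = (fun h => h * v.2 + x.2) by [].
by apply: is_derive_eq; rewrite !scR; ring.
Qed.

Inductive ex : Type := EX | EY | EC of R | EI | EL | EAdd of ex & ex | EMul of ex & ex.

Definition qq (z : R * R) : R := 1 + nsq z.

Fixpoint ev (e : ex) (z : R * R) : R :=
  match e with
  | EX => z.1 | EY => z.2 | EC r => r
  | EI => (qq z)^-1 | EL => ln (qq z)
  | EAdd a b => ev a z + ev b z
  | EMul a b => ev a z * ev b z
  end.

Definition dq (v : R * R) : ex :=
  EAdd (EMul (EC (2 * v.1)) EX) (EMul (EC (2 * v.2)) EY).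

Fixpoint dd (v : R * R) (e : ex) : ex :=
  match e with
  | EX => EC v.1 | EY => EC v.2 | EC _ => EC 0
  | EI => EMul (EC (-1)) (EMul (EMul EI EI) (dq v))
  | EL => EMul EI (dq v)
  | EAdd a b => EAdd (dd v a) (dd v b)
  | EMul a b => EAdd (EMul (dd v a) b) (EMul a (dd v b))
  end.

Lemma qq_gt0 z : 0 < qq z.
Proof. by rewrite /qq /nsq ltr_pwDl // addr_ge0 // sqr_ge0. Qed.

Lemma der_qq x v : is_derive x v qq (ev (dq v) x).
Proof.
have h1 := is_deriveX 2 (der_fst x v).
have h2 := is_deriveX 2 (der_snd x v).
have h := is_deriveD (is_derive_cst (1 : R) x v) (is_deriveD h1 h2).
apply: is_derive_eq h _.
by rewrite /= !scR; ring.
Qed.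

Lemma cont_qq : continuous qq.
Proof.
move=> z; apply: continuousD; first exact: cst_continuous.
by apply: continuousD; apply: continuousM; (exact: cont_fst || exact: cont_snd).
Qed.

Lemma ev_der e x v : is_derive x v (ev e) (ev (dd v e) x).
Proof.
elim: e => [| |r| | |a IHa b IHb|a IHa b IHb] /=.
- exact: der_fst.
- exact: der_snd.
- exact: is_derive_cst.
- apply: is_derive_line.
  have hq := line_is_derive (der_qq x v).
  have h0 : qq (0 *: v + x) != 0 by rewrite gt_eqF // qq_gt0.
  apply: is_derive_eq (@is_deriveV _ (fun h : R => qq (h *: v + x)) 0 _ 1 h0 hq) _.
  rewrite scale0r add0r scR /=.
  have t0 : qq x != 0 by rewrite gt_eqF // qq_gt0.
  move: t0; set t := qq x => t0; by field.
- apply: is_derive_line.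
  have hq := line_is_derive (der_qq x v).
  have hl := is_derive1_ln (qq_gt0 (0 *: v + x)).
  apply: is_derive_eq (@is_derive1_comp _ (@ln R) (fun h : R => qq (h *: v + x)) 0 _ _ hl hq) _.
  by rewrite scale0r add0r.
- exact: is_deriveD IHa IHb.
- apply: is_derive_eq (is_deriveM IHa IHb) _.
  by rewrite !scR; ring.
Qed.

Lemma ev_cont e : continuous (ev e).
Proof.
elim: e => [| |r| | |a IHa b IHb|a IHa b IHb] /=.
- exact: cont_fst.
- exact: cont_snd.
- exact: cst_continuous.
- move=> z; apply: continuousV; first by rewrite gt_eqF // qq_gt0.
  exact: cont_qq.
- move=> z; apply: continuous_comp; first exact: cont_qq.
  exact: continuous_ln (qq_gt0 z).
- by move=> z; exact: continuousD (IHa z) (IHb z).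
- by move=> z; exact: continuousM (IHa z) (IHb z).
Qed.

Lemma D_ev v e : 'D_v (ev e) = ev (dd v e).
Proof. by apply: funext => x; case: (ev_der e x v). Qed.

Lemma ev_smooth e : smooth (ev e).
Proof.
move=> n; elim: n e => [|n IH] e /=; first exact: ev_cont.
split; first exact: ev_cont.
- by move=> v x; case: (ev_der e x v).
- by move=> v; rewrite D_ev.
Qed.


Definition ePhi := EAdd (EC 2) EL.

Lemma D_ev' v e x : derive (ev e) x v = ev (dd v e) x.
Proof. by case: (ev_der e x v). Qed.

Lemma Lap_ePhi z : 0 < Lap (ev ePhi) z.
Proof.
have E : Lap (ev ePhi) z = 4 / qq z ^+ 2.
  rewrite /Lap !D_ev !D_ev' /=.
  have q0 := qq_gt0 z; rewrite /qq /nsq in q0 *.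
  field; by rewrite gt_eqF.
by rewrite E divr_gt0 // exprn_gt0 // qq_gt0.
Qed.

Lemma nsq_gt0 (w : R * R) : w != 0 -> 0 < nsq w.
Proof.
case: w => w1 w2 hw; rewrite /nsq /= lt_def addr_ge0 ?sqr_ge0 // andbT.
apply: contra hw; rewrite paddr_eq0 ?sqr_ge0 // !sqrf_eq0 => /andP[/eqP -> /eqP ->].
by [].
Qed.

Lemma rel_ePhi w : w != 0 -> ev ePhi w = ev ePhi (cinv w) + ln (nsq w).
Proof.
move=> /nsq_gt0 n0.
have h1 : qq (cinv w) = 1 + (nsq w)^-1.
  rewrite /qq /cinv /nsq /=; congr (1 + _).
  move: n0; rewrite /nsq => n0; field; by rewrite gt_eqF.
have a0 : 0 < 1 + (nsq w)^-1 by rewrite ltr_pwDl // ?invr_ge0 ltW.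
have h2 : ln (qq w) = ln (1 + (nsq w)^-1) + ln (nsq w).
  have := @lnM R (1 + (nsq w)^-1) (nsq w); rewrite !posrE => /(_ a0 n0) /= <-.
  congr ln; rewrite /qq mulrDl mul1r mulVf ?gt_eqF //; ring.
rewrite /= h1 h2; lra.
Qed.

Lemma smooth_ePhi : smooth_pos_metric (ev ePhi).
Proof.
exists (ev ePhi); split => //; try exact: ev_smooth; try exact: Lap_ePhi.
split; try exact: ev_cont.
by move=> w; exact: rel_ePhi.
Qed.

End S2.

Theorem proposition4p15 (R : realType) :
  exists N : nat -> {poly R[i]} -> R,
    [/\ graded_herm_norm N,
        (exists phi0 : R * R -> R, smooth_pos_metric phi0 /\ FS_unif_cvg N phi0) &
        forall phi : R * R -> R, cont_psh_metric phi ->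
          forall mu : {measure set (R * R) -> \bar R}, is_MA_measure phi mu ->
            ~ equiv_graded_norms N (Hilb phi mu)].
Proof.
exists (@NN R); split.
- by move=> k _; exact: herm_NN.
- exists (@phi0 R); split; last exact: FS_cvg.
  have -> : @phi0 R = @ev R (@ePhi R) by apply: funext.
  exact: smooth_ePhi.
- move=> phi [psi1 [[cphi _ _] _ _]] mu _; exact: not_equiv.
Qed.
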